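(* Let $S$ be the antipode of $C(q)$. Then for every $n\ge0$, $\mathrm{St}_n=(-1)^nS(1_{\mathfrak{gl}_n(\mathbb{F}_q)})$.
   Context: Let $q$ be a prime power, $C_n(q)$ the complex functions on $\mathfrak{gl}_n(\mathbb{F}_q)$ invariant under $\mathrm{GL}_n(\mathbb{F}_q)$-conjugation, and $C(q)=\bigoplus_nC_n(q)$ the connected graded Hopf algebra over $\mathbb{C}$ with multiplication given by Harish-Chandra induction from block-diagonal Levis $\mathfrak{gl}_k\times\mathfrak{gl}_l\subseteq\mathfrak{gl}_{k+l}$, co-multiplication on $C_n(q)$ given by $\sum_{k+l=n}$ of Harish-Chandra restrictions to $\mathfrak{gl}_k\times\mathfrak{gl}_l$, unit/co-unit the inclusion of/projection to $C_0(q)=\mathbb{C}$. The duality operation is $\mathcal{D}_n(f)=\sum_P(-1)^{r(P)}R^{\mathcal{G}_n}_{\mathcal{L}_P}{}^*R^{\mathcal{G}_n}_{\mathcal{L}_P}(f)$, summed over the $F$-stable parabolics containing a fixed $F$-stable Borel of $\mathrm{GL}_n$, with $\mathcal{L}_P$ the Lie algebra of an $F$-stable Levi of $P$ and $r(P)$ its semisimple $\mathbb{F}_q$-rank. $1_{\mathfrak{gl}_n(\mathbb{F}_q)}$ is the constant function $1$, and the Steinberg function is $\mathrm{St}_n:=\mathcal{D}_n(1_{\mathfrak{gl}_n(\mathbb{F}_q)})$. *)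

(* Defs.v *)
(* Finite field F = F_q (q = #|F|), complex values in algC. *)
From HB Require Import structures.
From mathcomp Require Import all_boot all_order all_algebra all_field.
Set Implicit Arguments. Unset Strict Implicit. Unset Printing Implicit Defensive.
Import GRing.Theory Num.Theory.
Local Open Scope ring_scope.

Section GLq.
Variable F : finFieldType.

(* Functions on gl_k x gl_l (= C_k (x) C_l) are curried functions.          *)
Definition Pset2 k l : {set 'M[F]_(k + l)} :=
  [set g | (g \in unitmx) && (dlsubmx g == 0)].

(* Harish-Chandra induction gl_k x gl_l -> gl_(k+l): the multiplication.   *)
Definition HCind2 k l (g : 'M[F]_k -> 'M[F]_l -> algC) (x : 'M[F]_(k + l))
  : algC :=
  (#|Pset2 k l|%:R)^-1 *
  \sum_(h : 'M[F]_(k + l) | (h \in unitmx) &&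
          (dlsubmx (invmx h *m x *m h) == 0))
     g (ulsubmx (invmx h *m x *m h)) (drsubmx (invmx h *m x *m h)).

Definition HCres2 k l (f : 'M[F]_(k + l) -> algC) (A : 'M[F]_k) (B : 'M[F]_l)
  : algC :=
  (#|{: 'M[F]_(k, l)}|%:R)^-1 *
  \sum_(Cm : 'M[F]_(k, l)) f (block_mx A Cm 0 B).

(* Components of the comultiplication C_n -> C_k (x) C_(n-k), and of the
   multiplication C_k (x) C_(n-k) -> C_n, for k <= n. *)
Definition coprod n k (hk : (k <= n)%N) (f : 'M[F]_n -> algC)
  : 'M[F]_k -> 'M[F]_(n - k) -> algC :=
  HCres2 (fun x => f (castmx (subnKC hk, subnKC hk) x)).

Definition prod n k (hk : (k <= n)%N) (g : 'M[F]_k -> 'M[F]_(n - k) -> algC)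
  : 'M[F]_n -> algC :=
  fun x => HCind2 g (castmx (esym (subnKC hk), esym (subnKC hk)) x).

(* Antipode of the connected graded bialgebra C(q): the unique linear S with
   m o (S (x) id) o Delta = eta o eps, i.e. S_0 = id and for n >= 1
   S_n f = - sum_{k < n} m_{k,n-k} ((S_k (x) id) (Delta_{k,n-k} f)).
   (S_k (x) id) acts on the first tensor factor. Defined with fuel >= n. *)
Fixpoint antipode_aux (fuel : nat) (n : nat) (f : 'M[F]_n -> algC)
  : 'M[F]_n -> algC :=
  match fuel with
  | 0 => f
  | fuel'.+1 =>
      if n == 0%N then f else
      fun x => - \sum_(k < n)
        prod (ltnW (ltn_ord k))
          (fun A B => antipode_aux fuel' (fun A' => coprod (ltnW (ltn_ord k)) f A' B) A)
          x
  end.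

Definition antipode n (f : 'M[F]_n -> algC) : 'M[F]_n -> algC :=
  antipode_aux n f.

(* Parabolics containing the upper triangular Borel <-> subsets I of the
   simple roots alpha_j (j : 'I_n.-1, between positions j and j+1).
   blk I i = index of the Levi block containing position i.            *)
Definition blk n (I : {set 'I_n.-1}) (i : 'I_n) : nat :=
  #|[set j : 'I_n.-1 | (j < i)%N && (j \notin I)]|.

Definition inParab n (I : {set 'I_n.-1}) (x : 'M[F]_n) : bool :=
  [forall i, [forall j, (blk I j < blk I i)%N ==> (x i j == 0)]].

Definition inNilrad n (I : {set 'I_n.-1}) (x : 'M[F]_n) : bool :=
  [forall i, [forall j, (blk I j <= blk I i)%N ==> (x i j == 0)]].

Definition leviProj n (I : {set 'I_n.-1}) (x : 'M[F]_n) : 'M[F]_n :=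
  \matrix_(i, j) if blk I i == blk I j then x i j else 0.

Definition ParabGrp n (I : {set 'I_n.-1}) : {set 'M[F]_n} :=
  [set g | (g \in unitmx) && inParab I g].

(* Functions on l_I are represented as functions on gl_n, only ever
   evaluated on l_I. *)
Definition HCind n (I : {set 'I_n.-1}) (f : 'M[F]_n -> algC) (x : 'M[F]_n)
  : algC :=
  (#|ParabGrp I|%:R)^-1 *
  \sum_(g : 'M[F]_n | (g \in unitmx) && inParab I (invmx g *m x *m g))
     f (leviProj I (invmx g *m x *m g)).

Definition HCres n (I : {set 'I_n.-1}) (f : 'M[F]_n -> algC) (y : 'M[F]_n)
  : algC :=
  (#|[set v : 'M[F]_n | inNilrad I v]|%:R)^-1 *
  \sum_(v : 'M[F]_n | inNilrad I v) f (y + v).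

(* r(P_I) = semisimple rank of the Levi = #|I| *)
Definition duality n (f : 'M[F]_n -> algC) (x : 'M[F]_n) : algC :=
  \sum_(I : {set 'I_n.-1}) (-1) ^+ #|I| * HCind I (HCres I f) x.

Definition one_gl n : 'M[F]_n -> algC := fun _ => 1.

Definition Steinberg n : 'M[F]_n -> algC := duality (@one_gl n).

End GLq.

(* Main.v *)
Require Import Defs.
From mathcomp Require Import all_boot all_order all_algebra all_field.
From mathcomp Require Import zify.
From Stdlib Require Import FunctionalExtensionality.
Import GRing.Theory Num.Theory.
Set Implicit Arguments. Unset Strict Implicit. Unset Printing Implicit Defensive.
Local Open Scope ring_scope.

Definition ext (n k : nat) (I' : {set 'I_k.-1}) : {set 'I_n.-1} :=
  [set j : 'I_n.-1 | [exists j' in I', (j' : nat) == j] || (k <= j)%N].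
Arguments ext n k I' : clear implicits.

Lemma blk_lo k l (I' : {set 'I_k.-1}) (i : 'I_k) :
  blk (ext (k + l) k I') (lshift l i) = blk I' i.
Proof.
have le : (k.-1 <= (k + l).-1)%N by lia.
rewrite /blk.
set w := widen_ord le.
have winj : injective w by move=> a b /(congr1 val) /= /val_inj.
rewrite -(card_imset _ winj); apply: eq_card => j; apply/idP/idP.
- rewrite inE => /andP[ji jE].
  have jk : (j < k.-1)%N by have := ltn_ord i; rewrite /= in ji; lia.
  apply/imsetP; exists (Ordinal jk); last by apply: val_inj.
  rewrite inE /= ji /=; apply: contra jE => jI.
  rewrite inE; apply/orP; left; apply/existsP; exists (Ordinal jk).
  by rewrite jI eqxx.
- case/imsetP => j'; rewrite inE => /andP[ji nI] ->.
  rewrite inE /= ji /= inE negb_or; apply/andP; split.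
  + apply/existsP => -[j'' /andP[j''I /eqP e]].
    have : j'' = j' by apply: val_inj.
    by move=> ee; rewrite -ee j''I in nI.
  + by rewrite /w /= -ltnNge; have := ltn_ord j'; lia.
Qed.

Lemma blk_lohi k l (I' : {set 'I_k.-1}) (i : 'I_k) (j : 'I_l) :
  (blk (ext (k + l) k I') (lshift l i) < blk (ext (k + l) k I') (rshift k j))%N.
Proof.
rewrite /blk; apply: proper_card; apply/properP; split.
- apply/subsetP => x; rewrite !inE /= => /andP[xi ->]; rewrite andbT.
  by have := ltn_ord i; lia.
- have ck : (k.-1 < (k + l).-1)%N by have := ltn_ord i; have := ltn_ord j; lia.
  exists (Ordinal ck); rewrite !inE /=.
  + rewrite negb_or; apply/and3P; split.
    * by have := ltn_ord i; lia.
    * by apply/existsP => -[j'' /andP[_ /eqP e]]; have := ltn_ord j''; lia.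
    * by have := ltn_ord i; lia.
  + by have := ltn_ord i; rewrite negb_and -leqNgt; move=> ?; apply/orP; left; lia.
Qed.

Lemma blk_hi k l (I' : {set 'I_k.-1}) (i j : 'I_l) :
  blk (ext (k + l) k I') (rshift k i) = blk (ext (k + l) k I') (rshift k j).
Proof.
rewrite /blk; apply: eq_card => x; rewrite !inE /=.
case: (boolP (k <= x)%N) => kx; first by rewrite orbT !andbF.
rewrite -ltnNge in kx.
have -> : (x < k + i)%N by lia.
by have -> : (x < k + j)%N by lia.
Qed.

Section Mat.
Variable F : finFieldType.

Lemma parabE k l (I' : {set 'I_k.-1}) (w : 'M[F]_(k + l)) :
  inParab (ext (k + l) k I') w = (dlsubmx w == 0) && inParab I' (ulsubmx w).
Proof.
apply/idP/andP.
- move=> /forallP H; split.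
  + apply/eqP/matrixP => i j; rewrite !mxE.
    by have := forallP (H (rshift k i)) (lshift l j); rewrite blk_lohi /= => /eqP.
  + apply/forallP => i; apply/forallP => j; apply/implyP => hij.
    rewrite !mxE.
    by have := forallP (H (lshift l i)) (lshift l j); rewrite !blk_lo hij.
- case => /eqP dl0 /forallP Hul; apply/forallP => i; apply/forallP => j; apply/implyP.
  rewrite -(splitK i) -(splitK j).
  case: (split i) => i'; case: (split j) => j' /=.
  + rewrite !blk_lo => hij; have := forallP (Hul i') j'.
    by rewrite hij !mxE.
  + by rewrite ltnNge (ltnW (blk_lohi _ _ _)).
  + move=> _; move: (congr1 (fun M : 'M[F]_(l, k) => M i' j') dl0); rewrite !mxE => ->.
    by [].
  + by rewrite (blk_hi _ j' i') ltnn.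
Qed.

Lemma card_set_cnt n (P : pred 'M[F]_n) :
  #|[set g | P g]|%:R = \sum_(g | P g) (1:algC).
Proof. by rewrite -sum1dep_card natr_sum. Qed.

Lemma cnt_gt0 n (P : pred 'M[F]_n) x : P x -> \sum_(g | P g) (1:algC) != 0.
Proof.
move=> Px; rewrite sumr_const pnatr_eq0 -lt0n; apply/card_gt0P; by exists x.
Qed.

Lemma HCind_one n (I : {set 'I_n.-1}) x :
  HCind I (@one_gl F n) x =
  (\sum_(p : 'M[F]_n | (p \in unitmx) && inParab I p) (1:algC))^-1 *
  \sum_(g : 'M[F]_n | (g \in unitmx) && inParab I (invmx g *m x *m g)) (1:algC).
Proof. by rewrite /HCind /ParabGrp card_set_cnt. Qed.

Lemma invmxM' n (A B : 'M[F]_n) : A \in unitmx -> B \in unitmx ->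
  invmx (A *m B) = invmx B *m invmx A.
Proof.
move=> Au Bu.
have H : (A *m B) *m (invmx B *m invmx A) = 1%:M.
  by rewrite mulmxA -(mulmxA A) mulmxV // mulmx1 mulmxV.
have ABu : A *m B \in unitmx by rewrite unitmx_mul Au Bu.
by rewrite -[LHS]mulmx1 -H mulmxA mulVmx // mul1mx.
Qed.

Section Key.
Variables (k l : nat) (I' : {set 'I_k.-1}).
Local Notation E := (ext (k + l) k I').
Definition D (g : 'M[F]_k) : 'M[F]_(k + l) := block_mx g 0 0 (1%:M : 'M_l).

Lemma Dunit g : g \in unitmx -> D g \in unitmx.
Proof. by move=> gu; rewrite /D block_diag_mx_unit gu unitmx1. Qed.

Lemma invD g : g \in unitmx -> invmx (D g) = D (invmx g).
Proof. by move=> gu; rewrite /D invmx_block_diag ?invmx1 // -/(D g) Dunit. Qed.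

Lemma mulD (p : 'M[F]_(k + l)) g :
  p *m D g = block_mx (ulsubmx p *m g) (ursubmx p) (dlsubmx p *m g) (drsubmx p).
Proof.
rewrite -{1}[p]submxK /D mulmx_block.
by rewrite !(mulmx0, mul0mx, addr0, add0r, mulmx1, mul1mx).
Qed.

Lemma conjD (z : 'M[F]_(k + l)) g :
  D (invmx g) *m z *m D g =
  block_mx (invmx g *m ulsubmx z *m g) (invmx g *m ursubmx z)
           (dlsubmx z *m g) (drsubmx z).
Proof.
rewrite -[z in LHS]submxK /D !mulmx_block.
by rewrite !(mulmx0, mul0mx, addr0, add0r, mulmx1, mul1mx).
Qed.

Lemma mulg_eq0 m (A : 'M[F]_(m, k)) g : g \in unitmx -> (A *m g == 0) = (A == 0).
Proof.
move=> gu; apply/eqP/eqP => [|->]; last by rewrite mul0mx.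
by move/(congr1 (mulmx^~ (invmx g))); rewrite mulmxK // mul0mx.
Qed.

Lemma cond_split (y h : 'M[F]_(k + l)) g : h \in unitmx -> g \in unitmx ->
  inParab E (invmx (h *m D g) *m y *m (h *m D g)) =
  (dlsubmx (invmx h *m y *m h) == 0) &&
  inParab I' (invmx g *m ulsubmx (invmx h *m y *m h) *m g).
Proof.
move=> hu gu.
rewrite invmxM' ?Dunit // invD //.
have -> : D (invmx g) *m invmx h *m y *m (h *m D g) =
          D (invmx g) *m (invmx h *m y *m h) *m D g by rewrite !mulmxA.
by rewrite conjD parabE block_mxKdl block_mxKul mulg_eq0.
Qed.

Lemma cond_mulD (p : 'M[F]_(k + l)) g : g \in unitmx ->
  inParab E (p *m D g) = (dlsubmx p == 0) && inParab I' (ulsubmx p *m g).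
Proof. by move=> gu; rewrite mulD parabE block_mxKdl block_mxKul mulg_eq0. Qed.

Lemma mulD_inj g : g \in unitmx -> injective (fun p : 'M[F]_(k + l) => p *m D g).
Proof. by move=> gu; apply: (can_inj (mulmxK (Dunit gu))). Qed.

End Key.
End Mat.
Section Key2.
Variable F : finFieldType.
Variables (k l : nat) (I' : {set 'I_k.-1}).
Local Notation E := (ext (k + l) k I').

Lemma N1 (y : 'M[F]_(k + l)) :
 \sum_(h | (h \in unitmx) && (dlsubmx (invmx h *m y *m h) == 0))
    \sum_(g : 'M[F]_k | (g \in unitmx) &&
        inParab I' (invmx g *m ulsubmx (invmx h *m y *m h) *m g)) (1:algC)
 = (\sum_(g : 'M[F]_k | g \in unitmx) (1:algC)) *
   \sum_(h : 'M_(k + l) | (h \in unitmx) && inParab E (invmx h *m y *m h)) 1.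
Proof.
rewrite big_mkcondr /=.
transitivity (\sum_(h | h \in unitmx) \sum_(g : 'M[F]_k | g \in unitmx)
  (if inParab E (invmx (h *m D l g) *m y *m (h *m D l g)) then (1:algC) else 0)).
  apply: eq_bigr => h hu.
  case: eqP => dl0.
    rewrite big_mkcondr; apply: eq_bigr => g gu.
    by rewrite cond_split // dl0 eqxx.
  symmetry; apply: big1 => g gu.
  by rewrite cond_split //; move/eqP/negbTE: dl0 => ->.
rewrite exchange_big /= mulr_suml; apply: eq_bigr => g gu.
rewrite mul1r -big_mkcondr /=.
rewrite [RHS](reindex_inj (mulD_inj (l:=l) gu)) /=.
by apply: eq_bigl => h; rewrite unitmx_mul Dunit // andbT.
Qed.

Lemma sizeE :
  (\sum_(g : 'M[F]_k | g \in unitmx) (1:algC)) *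
  (\sum_(p : 'M[F]_(k + l) | (p \in unitmx) && inParab E p) (1:algC)) =
  (\sum_(p : 'M[F]_(k + l) | (p \in unitmx) && (dlsubmx p == 0)) (1:algC)) *
  (\sum_(g : 'M[F]_k | (g \in unitmx) && inParab I' g) (1:algC)).
Proof.
rewrite mulr_suml.
transitivity (\sum_(g : 'M[F]_k | g \in unitmx) \sum_(p : 'M[F]_(k + l) | p \in unitmx)
   (if (dlsubmx p == 0) && inParab I' (ulsubmx p *m g) then (1:algC) else 0)).
  apply: eq_bigr => g gu; rewrite mul1r (reindex_inj (mulD_inj (l:=l) gu)) /=.
  rewrite (eq_bigl (fun p => (p \in unitmx) &&
       ((dlsubmx p == 0) && inParab I' (ulsubmx p *m g)))).
    by rewrite big_mkcondr.
  by move=> p; rewrite unitmx_mul Dunit // andbT cond_mulD.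
rewrite exchange_big /= mulr_suml big_mkcondr /=; apply: eq_bigr => p pu.
case: eqP => dl0 /=; last by apply: big1.
rewrite mul1r -big_mkcondr /=.
have aU : ulsubmx p \in unitmx.
  move: pu; rewrite -[p]submxK dl0 !unitmxE det_ublock unitrM.
  by case/andP; rewrite block_mxKul.
rewrite (reindex_inj (can_inj (mulKVmx aU))) /=.
by apply: eq_bigl => g; rewrite unitmx_mul unitmx_inv aU /= mulKVmx.
Qed.

Lemma key (y : 'M[F]_(k + l)) :
  HCind2 (fun A (B : 'M[F]_l) => HCind I' (@one_gl F k) A) y =
  HCind E (@one_gl F (k + l)) y.
Proof.
rewrite /HCind2 /Pset2 card_set_cnt.
set P2 := (\sum_(g | _ && (dlsubmx g == 0)) 1).
under eq_bigr => h _ do rewrite HCind_one.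
rewrite -mulr_sumr N1 HCind_one.
have Gk0 : \sum_(g : 'M[F]_k | g \in unitmx) (1:algC) != 0.
  by apply: (@cnt_gt0 _ _ _ 1%:M); rewrite unitmx1.
rewrite !mulrA; congr (_ * _).
by rewrite -invfM -sizeE invfM mulrAC mulVf // mul1r.
Qed.
End Key2.

Definition kI n' (I : {set 'I_n'}) : 'I_n'.+1 :=
  inord (\max_(j in ~: I) (j : nat).+1)%N.
Definition res n k (I : {set 'I_n.-1}) : {set 'I_k.-1} :=
  [set j' : 'I_k.-1 | [exists j in I, (j : nat) == j']].
Arguments res n k I : clear implicits.

Lemma maxI_le n' (I : {set 'I_n'}) : (\max_(j in ~: I) (j : nat).+1 <= n')%N.
Proof. by apply/bigmax_leqP => j _; exact: ltn_ord. Qed.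

Lemma kI_ext n' (k : 'I_n'.+1) (I' : {set 'I_k.-1}) : kI (ext n'.+1 k I') = k.
Proof.
apply: val_inj => /=; rewrite inordK; last by rewrite ltnS maxI_le.
apply/eqP; rewrite eqn_leq; apply/andP; split.
- apply/bigmax_leqP => j; rewrite in_setC inE negb_or => /andP[_].
  by rewrite -ltnNge.
- case: (ltnP 0 k) => [kpos|k0]; last by apply: leq_trans k0 _.
  have ck : (k.-1 < n')%N by have := ltn_ord k; lia.
  have cin : Ordinal ck \in ~: ext n'.+1 k I'.
    rewrite in_setC inE negb_or /=; apply/andP; split.
      by apply/existsP => -[j'' /andP[_ /eqP e]]; have := ltn_ord j''; lia.
    by rewrite -ltnNge; lia.
  by apply: leq_trans (leq_bigmax_cond _ cin) => /=; lia.
Qed.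

Lemma res_ext n k (I' : {set 'I_k.-1}) : (k <= n)%N -> res n k (ext n k I') = I'.
Proof.
move=> kn; apply/setP => j'; rewrite inE; apply/existsP/idP.
- case=> j /andP[]; rewrite inE => /orP[/existsP[j'' /andP[j''I /eqP e]] | kj] /eqP jj'.
    by have -> : j' = j'' by apply: val_inj; rewrite /= -jj' e.
  by have := ltn_ord j'; lia.
- move=> j'I.
  have jn : (j' < n.-1)%N by have := ltn_ord j'; lia.
  exists (Ordinal jn); rewrite /= eqxx andbT inE; apply/orP; left.
  by apply/existsP; exists j'; rewrite j'I eqxx.
Qed.

Lemma ext_res n' (k : 'I_n'.+1) (I : {set 'I_n'}) :
  kI I = k -> ext n'.+1 k (res n'.+1 k I) = I.
Proof.
move=> hk.
have Mk : (\max_(j in ~: I) (j : nat).+1)%N = k.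
  by rewrite -hk /kI /= inordK // ltnS maxI_le.
apply/setP => j; rewrite !inE.
case: (leqP k j) => kj.
  rewrite orbT; apply/esym; apply: contraT => jI.
  have jin : j \in ~: I by rewrite in_setC.
  have := @leq_bigmax_cond _ _ (fun j : 'I_n' => (j:nat).+1) _ jin.
  by rewrite Mk ltnNge kj.
rewrite orbF.
case: (ltnP j k.-1) => jk.
- apply/existsP/idP.
  + case=> j' /andP[]; rewrite inE => /existsP[j0 /andP[j0I /eqP e]] /eqP jj'.
    by have -> : j = j0 by apply: val_inj; rewrite /= e jj'.
  + move=> jI; exists (Ordinal jk); rewrite /= eqxx andbT inE.
    by apply/existsP; exists j; rewrite jI eqxx.
- have jk1 : (j : nat) = k.-1 by lia.
  have pos : (0 < #|~: I|)%N.
    rewrite lt0n; apply/negP => /eqP c0.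
    move/eqP: c0; rewrite cards_eq0 => /eqP c0.
    by move: Mk; rewrite c0 big_set0 => k0; lia.
  have [j0 j0I Mj0] := eq_bigmax_cond (fun j : 'I_n' => (j : nat).+1) pos.
  have -> : j = j0 by apply: ord_inj; move: Mj0 jk1; rewrite Mk /= => Mj0 jk1; lia.
  rewrite in_setC in j0I; rewrite (negbTE j0I).
  have j0k : (j0.+1 = k)%N by rewrite -Mj0 Mk.
  apply/existsP => -[j' /andP[_ /eqP e]]; have := ltn_ord j'; move: e; rewrite /= => e ?; lia.
Qed.

Lemma card_geq m k : #|[set j : 'I_m | (k <= j)%N]| = (m - k)%N.
Proof.
rewrite -sum1dep_card.
have := @big_geq_mkord _ 0%N addn k m (fun _ => true) (fun _ => 1%N).
by rewrite sum_nat_const_nat muln1 => ->; apply: eq_bigl.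
Qed.

Lemma card_ext n k (I' : {set 'I_k.-1}) : (k <= n)%N ->
  #|ext n k I'| = (#|I'| + (n.-1 - k))%N.
Proof.
move=> kn.
have le : (k.-1 <= n.-1)%N by lia.
set w := widen_ord le.
have winj : injective w by move=> a b /(congr1 val) /= /val_inj.
have -> : ext n k I' = (w @: I') :|: [set j : 'I_n.-1 | (k <= j)%N].
  apply/setP => j; rewrite !inE; congr (_ || _).
  apply/existsP/imsetP.
  + by case=> j' /andP[j'I /eqP e]; exists j' => //; apply: val_inj.
  + by case=> j' j'I ->; exists j'; rewrite j'I eqxx.
rewrite cardsU card_imset // card_geq.
have -> : w @: I' :&: [set j : 'I_n.-1 | (k <= j)%N] = set0.
  apply/setP => j; rewrite !inE; apply/negP => /andP[/imsetP[j' _ ->]].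
  by rewrite /w /=; have := ltn_ord j'; lia.
by rewrite cards0 subn0.
Qed.

Section Comb.
Variable F : finFieldType.

Definition T n (x : 'M[F]_n) : algC :=
  \sum_(I : {set 'I_n.-1}) (-1) ^+ (n - #|I|) * HCind I (@one_gl F n) x.

Lemma sign_ext n' (k : 'I_n'.+1) (I' : {set 'I_k.-1}) :
  (-1) ^+ (n'.+1 - #|ext n'.+1 k I'|) = - (-1) ^+ (k - #|I'|) :> algC.
Proof.
rewrite card_ext; last by apply: ltnW.
have := max_card I'; rewrite card_ord => hI.
have := ltn_ord k => hk.
have -> : (n'.+1 - (#|I'| + (n'.+1.-1 - k)) = (k - #|I'|).+1)%N by lia.
by rewrite exprS mulN1r.
Qed.

Lemma transport k (I' : {set 'I_k.-1}) n m (e : n = m) (x : 'M[F]_n) :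
  HCind (ext m k I') (@one_gl F m) (castmx (e, e) x) =
  HCind (ext n k I') (@one_gl F n) x.
Proof. by case: m / e; rewrite castmx_id. Qed.

Lemma HCind2_lin k l (J : finType) (c : J -> algC) (h : J -> 'M[F]_k -> algC)
  (y : 'M[F]_(k + l)) :
  HCind2 (fun A (B : 'M[F]_l) => \sum_j c j * h j A) y =
  \sum_j c j * HCind2 (fun A (B : 'M[F]_l) => h j A) y.
Proof.
rewrite /HCind2 exchange_big mulr_sumr; apply: eq_bigr => j _.
by rewrite [RHS]mulrCA [in RHS]mulr_sumr.
Qed.

Lemma prodT n k (hk : (k <= n)%N) (x : 'M[F]_n) :
  prod hk (fun A (B : 'M[F]_(n - k)) => T A) x =
  \sum_(I' : {set 'I_k.-1}) (-1) ^+ (k - #|I'|) * HCind (ext n k I') (@one_gl F n) x.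
Proof.
rewrite /prod /T (HCind2_lin (fun I : {set 'I_k.-1} => (-1) ^+ (k - #|I|))
                    (fun I A => HCind I (@one_gl F k) A)).
by apply: eq_bigr => I' _; rewrite key transport.
Qed.

Lemma T_rec n' (x : 'M[F]_n'.+1) :
  T x = - \sum_(k < n'.+1) prod (ltnW (ltn_ord k)) (fun A (B : 'M[F]_(n'.+1 - k)) => T A) x.
Proof.
rewrite (eq_bigr _ (fun k _ => prodT (ltnW (ltn_ord k)) x)).
rewrite /T (partition_big (@kI n') predT) //= -sumrN; apply: eq_bigr => k _.
rewrite (reindex_onto (ext n'.+1 k) (res n'.+1 k)) /=; last first.
  by move=> I /eqP; apply: ext_res.
rewrite (eq_bigl predT); last first.
  by move=> I'; rewrite kI_ext res_ext ?eqxx // ltnW.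
by rewrite -sumrN; apply: eq_bigr => I' _; rewrite sign_ext mulNr.
Qed.

End Comb.

Section Fin.
Variable F : finFieldType.

Lemma T0 (x : 'M[F]_0) : T x = 1.
Proof.
rewrite /T (big_pred1 set0); last first.
  by move=> I; apply/esym/eqP/setP => -[j hj].
rewrite sub0n expr0 mul1r HCind_one.
have P0 : forall (I : {set 'I_0.-1}) (w : 'M[F]_0), inParab I w.
  by move=> I w; apply/forallP => -[].
rewrite [X in _ * X](eq_bigl (fun g : 'M[F]_0 => (g \in unitmx) && inParab set0 g)).
  by rewrite mulVf // (@cnt_gt0 _ _ _ 1%:M) // unitmx1 P0.
by move=> g; rewrite !P0.
Qed.

Lemma HCres_one n (I : {set 'I_n.-1}) : HCres I (@one_gl F n) = @one_gl F n.
Proof.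
apply: functional_extensionality => y.
rewrite /HCres /one_gl card_set_cnt mulVf //.
apply: (@cnt_gt0 _ _ _ 0).
by apply/forallP => i; apply/forallP => j; rewrite mxE eqxx implybT.
Qed.

Lemma coprod_one n k (hk : (k <= n)%N) A B : coprod hk (@one_gl F n) A B = 1.
Proof.
rewrite /coprod /HCres2 /one_gl sumr_const mulVf // pnatr_eq0 -lt0n.
by apply/card_gt0P; exists 0.
Qed.

Lemma antip fuel : forall n (x : 'M[F]_n), (n <= fuel)%N ->
  antipode_aux fuel (@one_gl F n) x = T x.
Proof.
elim: fuel => [|fuel IH] n x.
  by rewrite leqn0 => /eqP n0; subst n; rewrite T0.
case: n x => [|n'] x hn; first by rewrite T0.
rewrite T_rec /=; congr (- _); apply: eq_bigr => k _.
have -> : (fun A (B : 'M[F]_(n'.+1 - k)) => antipode_aux fuel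
            (fun A' => coprod (ltnW (ltn_ord k)) (@one_gl F n'.+1) A' B) A) =
          (fun A (B : 'M[F]_(n'.+1 - k)) => T A).
  apply: functional_extensionality => A; apply: functional_extensionality => B.
  have -> : (fun A' => coprod (ltnW (ltn_ord k)) (@one_gl F n'.+1) A' B) = @one_gl F k.
    by apply: functional_extensionality => A'; rewrite coprod_one.
  by apply: IH; have := ltn_ord k; lia.
by [].
Qed.
End Fin.

Theorem mainTheorem9 (F : finFieldType) (n : nat) (x : 'M[F]_n) :
  Steinberg x = (-1) ^+ n * antipode (@one_gl F n) x.
Proof.
rewrite /antipode antip // /Steinberg /duality /T mulr_sumr.
apply: eq_bigr => I _; rewrite HCres_one mulrA -exprD; congr (_ * _).
have := max_card I; rewrite card_ord => hI.
have -> : (n + (n - #|I|) = #|I| + (n - #|I|) * 2)%N by lia.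
by rewrite exprD exprM sqrr_sign mulr1.
Qed.
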